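(* Consider the system $S'=\Lambda-\beta\frac{SB}{B+D}-(\mu+\psi)S+wR$, $V'=\psi S-\sigma\beta\frac{VB}{B+D}-\mu V$, $I'=\beta\frac{SB}{B+D}+\sigma\beta\frac{VB}{B+D}-(\mu+\gamma)I$, $R'=\gamma I-(\mu+w)R$, $B'=\eta I-\delta B$. Consider a bifurcation point in parameter space (as described in the context) at which ${\cal R}_0=1$, $a=0$, $b>0$ and $e\neq 0$. Then $c\le 0$.
   Context: All parameters $\Lambda,\beta,D,\mu,\psi,w,\sigma,\gamma,\eta,\delta$ are positive constants. The unique disease-free equilibrium (DFE) is $(S,V,I,R,B)=\left(\frac{\Lambda}{\mu+\psi},\frac{\Lambda\psi}{\mu(\mu+\psi)},0,0,0\right)$, the infected variables are $I$ and $B$, and ${\cal R}_0=\frac{\eta\beta(S_0+\sigma V_0)}{D\delta(\mu+\gamma)}$ where $S_0,V_0$ are the DFE values. A bifurcation point is a parameter value at which ${\cal R}_0=1$, zero is a simple eigenvalue of the Jacobian at the DFE and all other eigenvalues have negative real parts. Two of the model parameters are chosen as $\alpha_1,\alpha_2$ (shifted so that the bifurcation point corresponds to $\alpha_1=\alpha_2=0$), with the DFE independent of $\alpha_1$. Adjoining $\dot\alpha_1=\dot\alpha_2=0$ and restricting to the centre manifold of the DFE at the bifurcation point gives a scalar equation $\dot u=h(u,\alpha_1,\alpha_2)$, with $u$ a coordinate vanishing at the DFE and increasing along the null eigenvector whose infected components are non-negative; $h(0,\alpha_1,\alpha_2)=0$. Set $a=\tfrac12h_{uu}$, $b=h_{u\alpha_1}$,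 $c=\tfrac13h_{uuu}$, $d=h_{uu\alpha_2}$, all at $(0,0,0)$, and $e=\frac{-bd+h_{uu\alpha_1}h_{u\alpha_2}}{2bc}$ evaluated at $(0,0,0)$. *)

(* Defs.v *)
From HB Require Import structures.
From mathcomp Require Import all_boot all_order all_algebra.
From mathcomp Require Import all_classical all_reals all_analysis.
From mathcomp Require Import complex.
Set Implicit Arguments. Unset Strict Implicit. Unset Printing Implicit Defensive.
Import Order.TTheory GRing.Theory Num.Theory.
Import numFieldNormedType.Exports.
Local Open Scope classical_set_scope.
Local Open Scope ring_scope.

Section Model.
Variable R : realType.

Definition Lam (p : 'I_10 -> R) := p (inord 0).
Definition bet (p : 'I_10 -> R) := p (inord 1).
Definition Dh  (p : 'I_10 -> R) := p (inord 2).
Definition mu  (p : 'I_10 -> R) := p (inord 3).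
Definition psi (p : 'I_10 -> R) := p (inord 4).
Definition wr  (p : 'I_10 -> R) := p (inord 5).
Definition sig (p : 'I_10 -> R) := p (inord 6).
Definition gam (p : 'I_10 -> R) := p (inord 7).
Definition eta (p : 'I_10 -> R) := p (inord 8).
Definition del (p : 'I_10 -> R) := p (inord 9).

Definition sS (x : 'rV[R]_5) := x 0 (inord 0).
Definition sV (x : 'rV[R]_5) := x 0 (inord 1).
Definition sI (x : 'rV[R]_5) := x 0 (inord 2).
Definition sR (x : 'rV[R]_5) := x 0 (inord 3).
Definition sB (x : 'rV[R]_5) := x 0 (inord 4).

Definition field (p : 'I_10 -> R) (x : 'rV[R]_5) : 'rV[R]_5 :=
  \row_(i < 5) nth 0
   [:: Lam p - bet p * (sS x * sB x / (sB x + Dh p)) - (mu p + psi p) * sS x + wr p * sR x;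
       psi p * sS x - sig p * bet p * (sV x * sB x / (sB x + Dh p)) - mu p * sV x;
       bet p * (sS x * sB x / (sB x + Dh p)) + sig p * bet p * (sV x * sB x / (sB x + Dh p))
         - (mu p + gam p) * sI x;
       gam p * sI x - (mu p + wr p) * sR x;
       eta p * sI x - del p * sB x] i.

Definition dfe (p : 'I_10 -> R) : 'rV[R]_5 :=
  \row_(i < 5) nth 0
   [:: Lam p / (mu p + psi p); Lam p * psi p / (mu p * (mu p + psi p)); 0; 0; 0] i.

Definition R0 (p : 'I_10 -> R) : R :=
  eta p * bet p * (sS (dfe p) + sig p * sV (dfe p))
  / (Dh p * del p * (mu p + gam p)).

Definition jac (p : 'I_10 -> R) : 'M[R]_5 :=
  \matrix_(i < 5, j < 5) 'D_(delta_mx 0 j) (fun x => field p x 0 i) (dfe p).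

Definition bif_spectrum (J : 'M[R]_5) : Prop :=
  mup 0 (char_poly J) = 1%N /\
  forall z : complex.complex R,
    root (map_poly (complex.real_complex R) (char_poly J)) z ->
    z != 0 -> complex.Re z < 0.

Definition shiftp (p0 : 'I_10 -> R) (i1 i2 : 'I_10) (a1 a2 : R) : 'I_10 -> R :=
  fun k => p0 k + (k == i1)%:R * a1 + (k == i2)%:R * a2.

(* Parameters as a function of the centre-manifold coordinates (u, a1, a2). *)
Definition parof (p0 : 'I_10 -> R) (i1 i2 : 'I_10) (y : 'rV[R]_3) : 'I_10 -> R :=
  shiftp p0 i1 i2 (y 0 (inord 1)) (y 0 (inord 2)).

Definition e3 (i : nat) : 'rV[R]_3 := delta_mx 0 (inord i).

Fixpoint CkOn (k : nat) (U : set 'rV[R]_3) (f : 'rV[R]_3 -> R) : Prop :=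
  match k with
  | 0%N => forall y, U y -> {for y, continuous f}
  | k'.+1 => (forall y, U y -> forall i : 'I_3, derivable f y (delta_mx 0 i)) /\
             (forall i : 'I_3, CkOn k' U (fun y => 'D_(delta_mx 0 i) f y))
  end.

(* Partial derivatives of the reduced field h at the origin
   (coordinate 0 = u, 1 = alpha1, 2 = alpha2). *)
Definition d1 (i : nat) (f : 'rV[R]_3 -> R) := fun y => 'D_(e3 i) f y.

Definition coef_a (h : 'rV[R]_3 -> R) : R := (d1 0 (d1 0 h) 0) / 2.
Definition coef_b (h : 'rV[R]_3 -> R) : R := d1 1 (d1 0 h) 0.
Definition coef_c (h : 'rV[R]_3 -> R) : R := (d1 0 (d1 0 (d1 0 h)) 0) / 3.
Definition coef_d (h : 'rV[R]_3 -> R) : R := d1 2 (d1 0 (d1 0 h)) 0.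
Definition coef_e (h : 'rV[R]_3 -> R) : R :=
  (- coef_b h * coef_d h + d1 1 (d1 0 (d1 0 h)) 0 * d1 2 (d1 0 h) 0)
  / (2 * coef_b h * coef_c h).

End Model.

(* Main.v *)
From Pilot Require Import Defs.
From HB Require Import structures.
From mathcomp Require Import all_boot all_order all_algebra.
From mathcomp Require Import all_classical all_reals all_analysis.
From mathcomp Require Import complex.
From mathcomp Require Import ring lra.
Import Order.TTheory GRing.Theory Num.Theory.
Import numFieldNormedType.Exports.
Local Open Scope classical_set_scope.
Local Open Scope ring_scope.
Import Pilot.Defs.
Set Implicit Arguments. Unset Strict Implicit. Unset Printing Implicit Defensive.

Section Calc.
Variable R : realType.
Implicit Types f g : R -> R.

Lemma near_eq_deriv f g (a b x : R) : (\forall u \near x, f u = g u) ->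
  is_derive x 1 f a -> is_derive x 1 g b -> a = b.
Proof.
move=> fg df dg; have h1 := near_eq_is_derive fg df.
by case: h1 => _ <-; case: dg => _ <-.
Qed.

Lemma near_near {P : R -> Prop} {x : R} : (\forall u \near x, P u) ->
  \forall u \near x, \forall v \near u, P v.
Proof. exact: nbhs_interior. Qed.

Definition J2 f f1 f2 := (\forall u \near (0:R), is_derive u (1:R) f (f1 u)) /\
  (\forall u \near (0:R), is_derive u (1:R) f1 (f2 u)).
Definition J3 f f1 f2 (f3 : R) := J2 f f1 f2 /\ is_derive (0:R) (1:R) f2 f3.

Lemma near_eq_near_deriv f g f1 g1 :
  (\forall u \near (0:R), f u = g u) ->
  (\forall u \near (0:R), is_derive u (1:R) f (f1 u)) ->
  (\forall u \near (0:R), is_derive u (1:R) g (g1 u)) ->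
  (\forall u \near (0:R), f1 u = g1 u).
Proof.
move=> fg df dg; have nfg := near_near fg.
near=> u; apply: (@near_eq_deriv f g (f1 u) (g1 u) u); [near: u; exact: nfg| |].
- near: u; exact: df.
- near: u; exact: dg.
Unshelve. all: by end_near. Qed.

Lemma J3_eq f f1 f2 (f3 : R) g g1 g2 (g3 : R) : J3 f f1 f2 f3 -> J3 g g1 g2 g3 ->
  (\forall u \near (0:R), f u = g u) ->
  [/\ f 0 = g 0, f1 0 = g1 0, f2 0 = g2 0 & f3 = g3].
Proof.
move=> [[df df1] df2] [[dg dg1] dg2] fg.
have e1 := @near_eq_near_deriv _ _ _ _ fg df dg.
have e2 := @near_eq_near_deriv _ _ _ _ e1 df1 dg1.
split; [exact: nbhs_singleton fg| exact: nbhs_singleton e1|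
  exact: nbhs_singleton e2|].
exact: (@near_eq_deriv _ _ _ _ _ e2 df2 dg2).
Qed.

Lemma J3_J2 f f1 f2 (f3 : R) : J3 f f1 f2 f3 -> J2 f f1 f2.
Proof. by case. Qed.

Lemma J2_eq f f1 f2 g g1 g2 : J2 f f1 f2 -> J2 g g1 g2 ->
  (\forall u \near (0:R), f u = g u) ->
  [/\ f 0 = g 0, f1 0 = g1 0 & f2 0 = g2 0].
Proof.
move=> [df df1] [dg dg1] fg.
have e1 := @near_eq_near_deriv _ _ _ _ fg df dg.
have e2 := @near_eq_near_deriv _ _ _ _ e1 df1 dg1.
split; [exact: nbhs_singleton fg| exact: nbhs_singleton e1|
  exact: nbhs_singleton e2].
Qed.

Lemma J2_cst (c : R) : J2 (fun=> c) (fun=> 0) (fun=> 0).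
Proof. by split; near=> u; apply: is_derive_eq. Unshelve. all: by end_near. Qed.

Lemma J3_cst (c : R) : J3 (fun=> c) (fun=> 0) (fun=> 0) 0.
Proof. split; first exact: J2_cst. by apply: is_derive_eq. Qed.

Lemma J2D f f1 f2 g g1 g2 : J2 f f1 f2 -> J2 g g1 g2 ->
  J2 (fun u => f u + g u) (fun u => f1 u + g1 u) (fun u => f2 u + g2 u).
Proof.
move=> [df df1] [dg dg1]; split; near=> u.
- have ? : is_derive u (1:R) f (f1 u) by near: u.
  have ? : is_derive u (1:R) g (g1 u) by near: u.
  exact: is_derive_eq.
- have ? : is_derive u (1:R) f1 (f2 u) by near: u.
  have ? : is_derive u (1:R) g1 (g2 u) by near: u.
  exact: is_derive_eq.
Unshelve. all: by end_near. Qed.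

Lemma J2M f f1 f2 g g1 g2 : J2 f f1 f2 -> J2 g g1 g2 ->
  J2 (fun u => f u * g u) (fun u => f1 u * g u + f u * g1 u)
     (fun u => f2 u * g u + 2 * (f1 u * g1 u) + f u * g2 u).
Proof.
move=> [df df1] [dg dg1]; split; near=> u.
- have ? : is_derive u (1:R) f (f1 u) by near: u.
  have ? : is_derive u (1:R) g (g1 u) by near: u.
  by apply: is_derive_eq; rewrite /GRing.scale /=; ring.
- have ? : is_derive u (1:R) f (f1 u) by near: u.
  have ? : is_derive u (1:R) g (g1 u) by near: u.
  have ? : is_derive u (1:R) f1 (f2 u) by near: u.
  have ? : is_derive u (1:R) g1 (g2 u) by near: u.
  by apply: is_derive_eq; rewrite /GRing.scale /=; ring.
Unshelve. all: by end_near. Qed.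

Lemma J3D f f1 f2 (f3 : R) g g1 g2 (g3 : R) : J3 f f1 f2 f3 -> J3 g g1 g2 g3 ->
  J3 (fun u => f u + g u) (fun u => f1 u + g1 u) (fun u => f2 u + g2 u)
     (f3 + g3).
Proof.
move=> [jf df2] [jg dg2]; split; first exact: J2D.
exact: is_derive_eq.
Qed.

Lemma J3M f f1 f2 (f3 : R) g g1 g2 (g3 : R) : J3 f f1 f2 f3 -> J3 g g1 g2 g3 ->
  J3 (fun u => f u * g u) (fun u => f1 u * g u + f u * g1 u)
     (fun u => f2 u * g u + 2 * (f1 u * g1 u) + f u * g2 u)
     (f3 * g 0 + 3 * (f2 0 * g1 0) + 3 * (f1 0 * g2 0) + f 0 * g3).
Proof.
move=> [[df df1] df2] [[dg dg1] dg2]; split; first exact: J2M.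
have ? : is_derive (0:R) (1:R) f (f1 0) by exact: nbhs_singleton df.
have ? : is_derive (0:R) (1:R) g (g1 0) by exact: nbhs_singleton dg.
have ? : is_derive (0:R) (1:R) f1 (f2 0) by exact: nbhs_singleton df1.
have ? : is_derive (0:R) (1:R) g1 (g2 0) by exact: nbhs_singleton dg1.
by apply: is_derive_eq; rewrite /GRing.scale /=; ring.
Qed.

Lemma is_derive_M0 (H Z : R -> R) (a : R) : H 0 = 0 -> is_derive (0:R) (1:R) H a ->
  {for 0, continuous Z} -> is_derive (0:R) (1:R) (fun u => H u * Z u) (a * Z 0).
Proof.
move=> H0 [dH <-] cZ.
have cv : (fun h : R => h^-1 *: ((fun u => H u * Z u) (h *: 1 + 0)
    - (fun u => H u * Z u) 0)) @ 0^' --> 'D_1 H 0 * Z 0.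
  have -> : (fun h : R => h^-1 *: ((fun u => H u * Z u) (h *: 1 + 0)
    - (fun u => H u * Z u) 0)) = (fun h => (h^-1 *: (H (h *: 1 + 0) - H 0))
         * Z (h *: 1 + 0)).
    apply/funext => h /=; rewrite H0 !mul0r subr0 /GRing.scale /=.
    by rewrite subr0 mulrA.
  apply: (@cvgM _ _ _ _ (fun h : R => h^-1 *: (H (h *: 1 + 0) - H 0))
     (fun h => Z (h *: 1 + 0))); first exact: dH.
  have -> : (fun h : R => Z (h *: 1 + 0)) = Z.
    by apply/funext => h; rewrite addr0 /GRing.scale /= mulr1.
  exact/continuous_withinNx.
have dd : derivable (fun u => H u * Z u) 0 1.
  exact: (cvgP _ cv).
split; first exact: dd.
exact: cvg_lim cv.
Qed.

Lemma J3M0 (H H1 H2 : R -> R) (h3 : R) Z Z1 Z2 : J3 H H1 H2 h3 -> H 0 = 0 ->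
  J2 Z Z1 Z2 -> {for 0, continuous Z2} ->
  J3 (fun u => H u * Z u) (fun u => H1 u * Z u + H u * Z1 u)
     (fun u => H2 u * Z u + 2 * (H1 u * Z1 u) + H u * Z2 u)
     (h3 * Z 0 + 3 * (H2 0 * Z1 0) + 3 * (H1 0 * Z2 0)).
Proof.
move=> [[dH dH1] dH2] H0 [dZ dZ1] cZ; split; first exact: J2M.
have ? : is_derive (0:R) (1:R) H (H1 0) by exact: nbhs_singleton dH.
have ? : is_derive (0:R) (1:R) Z (Z1 0) by exact: nbhs_singleton dZ.
have ? : is_derive (0:R) (1:R) H1 (H2 0) by exact: nbhs_singleton dH1.
have ? : is_derive (0:R) (1:R) Z1 (Z2 0) by exact: nbhs_singleton dZ1.
have ? := @is_derive_M0 _ _ _ H0 (nbhs_singleton dH) cZ.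
by apply: is_derive_eq; rewrite /GRing.scale /=; ring.
Qed.

Lemma J3_J2M0 (H H1 H2 : R -> R) (h3 : R) Z Z1 Z2 : J3 H H1 H2 h3 ->
  J2 Z Z1 Z2 ->
  J2 (fun u => H u * Z u) (fun u => H1 u * Z u + H u * Z1 u)
     (fun u => H2 u * Z u + 2 * (H1 u * Z1 u) + H u * Z2 u).
Proof. by move=> [jH _] jZ; exact: J2M. Qed.

End Calc.

Section Calc2.
Variable R : realType.
Implicit Types f g : R -> R.

Lemma is_derive_cont f (x d : R) : is_derive x (1:R) f d -> {for x, continuous f}.
Proof.
move=> df; apply: differentiable_continuous.
by apply/derivable1_diffP; case: df.
Qed.

Lemma J2N f f1 f2 : J2 f f1 f2 ->
  J2 (fun u => - f u) (fun u => - f1 u) (fun u => - f2 u).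
Proof.
move=> [df df1]; split; near=> u.
- have ? : is_derive u (1:R) f (f1 u) by near: u.
  exact: is_derive_eq.
- have ? : is_derive u (1:R) f1 (f2 u) by near: u.
  exact: is_derive_eq.
Unshelve. all: by end_near. Qed.

Lemma J2Z (c : R) f f1 f2 : J2 f f1 f2 ->
  J2 (fun u => c * f u) (fun u => c * f1 u) (fun u => c * f2 u).
Proof.
move=> [df df1]; split; near=> u.
- have ? : is_derive u (1:R) f (f1 u) by near: u.
  by apply: is_derive_eq; rewrite /GRing.scale /=; ring.
- have ? : is_derive u (1:R) f1 (f2 u) by near: u.
  by apply: is_derive_eq; rewrite /GRing.scale /=; ring.
Unshelve. all: by end_near. Qed.

Lemma J3N f f1 f2 (f3 : R) : J3 f f1 f2 f3 ->
  J3 (fun u => - f u) (fun u => - f1 u) (fun u => - f2 u) (- f3).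
Proof. move=> [jf df]; split; first exact: J2N. exact: is_derive_eq. Qed.

Lemma J3Z (c : R) f f1 f2 (f3 : R) : J3 f f1 f2 f3 ->
  J3 (fun u => c * f u) (fun u => c * f1 u) (fun u => c * f2 u) (c * f3).
Proof.
move=> [jf df]; split; first exact: J2Z.
by apply: is_derive_eq; rewrite /GRing.scale /=; ring.
Qed.

Definition C0 f := {for (0:R), continuous f}.

Lemma J2_C0 f f1 f2 : J2 f f1 f2 -> C0 f /\ C0 f1.
Proof.
move=> [df df1]; split.
- exact: is_derive_cont (nbhs_singleton df).
- exact: is_derive_cont (nbhs_singleton df1).
Qed.

Lemma C0D f g : C0 f -> C0 g -> C0 (fun u => f u + g u).
Proof. move=> cf cg; exact: cvgD. Qed.
Lemma C0M f g : C0 f -> C0 g -> C0 (fun u => f u * g u).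
Proof. move=> cf cg; exact: cvgM. Qed.
Lemma C0N f : C0 f -> C0 (fun u => - f u).
Proof. move=> cf; exact: cvgN. Qed.
Lemma C0cst (c : R) : C0 (fun=> c).
Proof. exact: cvg_cst. Qed.

End Calc2.

Section Calc3.
Variable R : realType.
Implicit Types f g : R -> R.
Definition J2C f f1 f2 := J2 f f1 f2 /\ C0 f2.

Lemma J2C_cst (c : R) : J2C (fun=> c) (fun=> 0) (fun=> 0).
Proof. by split; [exact: J2_cst| exact: C0cst]. Qed.

Lemma J2CD f f1 f2 g g1 g2 : J2C f f1 f2 -> J2C g g1 g2 ->
  J2C (fun u => f u + g u) (fun u => f1 u + g1 u) (fun u => f2 u + g2 u).
Proof. by move=> [jf cf] [jg cg]; split; [exact: J2D| exact: C0D]. Qed.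

Lemma J2CZ (c : R) f f1 f2 : J2C f f1 f2 ->
  J2C (fun u => c * f u) (fun u => c * f1 u) (fun u => c * f2 u).
Proof. by move=> [jf cf]; split; [exact: J2Z| apply: C0M; [exact: C0cst|]]. Qed.

Lemma J2CM f f1 f2 g g1 g2 : J2C f f1 f2 -> J2C g g1 g2 ->
  J2C (fun u => f u * g u) (fun u => f1 u * g u + f u * g1 u)
     (fun u => f2 u * g u + 2 * (f1 u * g1 u) + f u * g2 u).
Proof.
move=> [jf cf] [jg cg]; split; first exact: J2M.
have [c0 c1] := J2_C0 jf; have [d0 d1] := J2_C0 jg.
apply: C0D; first apply: C0D.
- exact: C0M.
- by apply: C0M; [exact: C0cst| exact: C0M].
- exact: C0M.
Qed.
End Calc3.

Section Alg.
Variable R : realType.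

Lemma final_alg (b D m p r s g e d S0 V0 k w0 w1 w2 w3 w4 z0 z1 z2 z3 z4 h3 : R) :
 0 < b -> 0 < D -> 0 < m -> 0 < p -> 0 < r -> 0 < s -> 0 < g -> 0 < e -> 0 < d ->
 0 < S0 -> 0 < V0 ->
 k = (m + g) / e ->
 - b * S0 * w4 / D - (m + p) * w0 + r * w3 = 0 ->
 p * w0 - s * b * V0 * w4 / D - m * w1 = 0 ->
 b * S0 * w4 / D + s * b * V0 * w4 / D - (m + g) * w2 = 0 ->
 g * w2 - (m + r) * w3 = 0 ->
 e * w2 - d * w4 = 0 ->
 0 < w2 ->
 e * b * (S0 + s * V0) = D * d * (m + g) ->
 e * z2 - d * z4 = 0 ->
 g * z2 - (m + r) * z3 = 0 ->
 2 * w4 * (r * w3 - (m + p) * w0) + D * (r * z3 - (m + p) * z0)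
   - b * (2 * (w0 * w4) + S0 * z4) = 0 ->
 2 * w4 * (p * w0 - m * w1) + D * (p * z0 - m * z1)
   - s * b * (2 * (w1 * w4) + V0 * z4) = 0 ->
 b * (w0 + s * w1) = k * d * w4 ->
 h3 * (D * (w2 + k * w4)) =
   b * (3 * (z0 + s * z1) * w4 + 3 * (w0 + s * w1) * z4) - k * d * (6 * (w4 * z4)) ->
 h3 < 0.
Proof.
move=> hb hD hm hp hr hs hg he hd hS hV ek L0 L1 L2 L3 L4 w2p R0 Z4 Z3 E0 E1 a0 c3.
have d0 : d != 0 by rewrite lt0r_neq0.
have D0 : D != 0 by rewrite lt0r_neq0.
have m0 : m != 0 by rewrite lt0r_neq0.
have mp0 : m + p != 0 by rewrite lt0r_neq0 // addr_gt0.
have mr0 : m + r != 0 by rewrite lt0r_neq0 // addr_gt0.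
have w20 : w2 != 0 by rewrite lt0r_neq0.
have b0 : b != 0 by rewrite lt0r_neq0.
have r0 : r != 0 by rewrite lt0r_neq0.
have e0 : e != 0 by rewrite lt0r_neq0.
have ew4 : w4 = e * w2 / d.
  by apply/eqP; rewrite -(can_eq (mulfK d0)) divfK //; apply/eqP; lra.
have ew3 : w3 = g * w2 / (m + r).
  by apply/eqP; rewrite -(can_eq (mulfK mr0)) divfK //; apply/eqP; lra.
have w4p : 0 < w4 by rewrite ew4 divr_gt0 // mulr_gt0.
have w3p : 0 < w3 by rewrite ew3 divr_gt0 ?mulr_gt0 ?addr_gt0.
have cons : w0 + w1 = - (w2 + w3).
  have : m * (w0 + w1 + w2 + w3) = 0 by lra.
  by move/eqP; rewrite mulf_eq0 (negbTE m0) /= => /eqP; lra.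
set rho := z2 / w2.
have ez4 : z4 = rho * w4.
  have -> : z4 = e * z2 / d.
    by apply/eqP; rewrite -(can_eq (mulfK d0)) divfK //; apply/eqP; lra.
  by rewrite /rho ew4; field; rewrite ?d0 ?w20.
have ez3 : z3 = rho * w3.
  have -> : z3 = g * z2 / (m + r).
    by apply/eqP; rewrite -(can_eq (mulfK mr0)) divfK //; apply/eqP; lra.
  by rewrite /rho ew3; field; rewrite ?mr0 ?w20.
have ez0 : z0 = (2 * w4 * (r * w3 - (m + p) * w0) + D * r * z3
    - b * (2 * (w0 * w4) + S0 * z4)) / (D * (m + p)).
  apply/eqP; rewrite -(can_eq (mulfK (mulf_neq0 D0 mp0))) divfK ?mulf_neq0 //.
  by apply/eqP; lra.
have ez1 : z1 = (2 * w4 * (p * w0 - m * w1) + D * p * z0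
    - s * b * (2 * (w1 * w4) + V0 * z4)) / (D * m).
  apply/eqP; rewrite -(can_eq (mulfK (mulf_neq0 D0 m0))) divfK ?mulf_neq0 //.
  by apply/eqP; lra.
have ew3' : w3 = ((m + p) * w0 + b * S0 * w4 / D) / r.
  by apply/eqP; rewrite -(can_eq (mulfK r0)) divfK //; apply/eqP; lra.
have ew1 : w1 = (p * w0 - s * b * V0 * w4 / D) / m.
  by apply/eqP; rewrite -(can_eq (mulfK m0)) divfK //; apply/eqP; lra.
set A := w0 + s * w1 - (S0 + s * V0) * w4 / D.
set T := z0 + s * z1 - (S0 + s * V0) * z4 / D.
have Dd0 : D * d != 0 by rewrite mulf_neq0.
have emg : m + g = e * b * (S0 + s * V0) / (D * d).
  by apply/eqP; rewrite -(can_eq (mulfK Dd0)) divfK //; apply/eqP; lra.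
have kd : k * d = b * (S0 + s * V0) / D by rewrite ek emg; field; rewrite ?e0 ?D0 ?d0.
have A0 : A = 0.
  rewrite /A; have : b * (w0 + s * w1) = b * ((S0 + s * V0) * w4 / D).
    by rewrite a0 kd; field; rewrite ?D0.
  by move/(mulfI b0) => ->; rewrite subrr.
have eT : T = 2 * b * s * w4 * (w0 + w1 - (S0 + V0) * w4 / D) / (D * (m + p))
   + (rho - 2 * b * w4 * (m + s * p + s * m) / (D * m * (m + p))) * A.
  rewrite /T /A ez1 ez0 ez3 ez4 ew3'; rewrite ew1; field.
  by rewrite D0 m0 mp0 r0.
have Tn : T < 0.
  rewrite eT A0 mulr0 addr0 cons pmulr_llt0 ?invr_gt0 ?mulr_gt0 ?addr_gt0 //.
  rewrite pmulr_rlt0 ?mulr_gt0 //.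
  have : 0 < (S0 + V0) * w4 / D by rewrite divr_gt0 ?mulr_gt0 ?addr_gt0.
  lra.
have e3 : h3 * (D * (w2 + k * w4)) = 3 * b * w4 * T.
  have a0z : b * (w0 + s * w1) * z4 = k * d * w4 * z4 by rewrite a0.
  have kdz : k * d * (w4 * z4) = b * (S0 + s * V0) / D * (w4 * z4) by rewrite kd.
  rewrite c3 /T; lra.
have Pp : 0 < D * (w2 + k * w4).
  by rewrite mulr_gt0 // addr_gt0 // mulr_gt0 // ek divr_gt0 // addr_gt0.
rewrite ltNge; apply/negP => h0.
have := mulr_ge0 h0 (ltW Pp); rewrite e3.
have : 3 * b * w4 * T < 0 by rewrite pmulr_rlt0 ?mulr_gt0.
lra.
Qed.
End Alg.


Section Main.
Variable R : realType.
Variables (p0 : 'I_10 -> R) (i1 i2 : 'I_10) (U : set 'rV[R]_3)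
  (phi : 'rV[R]_3 -> 'rV[R]_5) (h : 'rV[R]_3 -> R).
Hypothesis pos : forall k, 0 < p0 k.
Hypothesis HR0 : R0 p0 = 1.
Hypothesis oU : open U.
Hypothesis U0 : U 0.
Hypothesis Cphi : forall j : 'I_5, CkOn 3 U (fun y => phi y 0 j).
Hypothesis Ch : CkOn 3 U h.
Hypothesis Hdfe : forall y, U y -> y 0 (inord 0) = 0 -> phi y = dfe (parof p0 i1 i2 y).
Hypothesis Heq : forall y, U y ->
  h y *: 'D_(e3 R 0) phi y = field (parof p0 i1 i2 y) (phi y).

Local Notation e0 := (e3 R 0).
Definition ln (f : 'rV[R]_3 -> R) (u : R) := f (u *: e0).
Definition Dd (f : 'rV[R]_3 -> R) := fun y => 'D_e0 f y.
Definition P (k : nat) := fun y => phi y 0 (inord k).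

Lemma ln0 f : ln f 0 = f 0.
Proof. by rewrite /ln scale0r. Qed.

Lemma inord_eq3 (i j : nat) : (i < 3)%N -> (j < 3)%N ->
  ((inord i : 'I_3) == inord j) = (i == j).
Proof. by move=> hi hj; rewrite -val_eqE /= !inordK. Qed.

Lemma e0E (i : nat) : (i < 3)%N -> e0 0 (inord i) = (i == 0)%:R.
Proof. by move=> hi; rewrite /e3 mxE eqxx /= inord_eq3 // eq_sym. Qed.

Lemma parof_line u : parof p0 i1 i2 (u *: e0) = p0.
Proof.
rewrite /parof /shiftp; apply/funext => k.
by rewrite !mxE !inord_eq3 //= !mulr0 !addr0.
Qed.

Lemma nearU : \forall u \near (0:R), U (u *: e0).
Proof.
have nU : nbhs (0 : 'rV[R]_3) U by apply: open_nbhs_nbhs; split.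
have hc : (fun u : R => u *: e0) @ (0:R) --> (0:'rV[R]_3).
  rewrite -[X in _ --> X](scale0r e0); exact: scalel_continuous.
exact: hc _ nU.
Qed.

Lemma ln_derive f u : derivable f (u *: e0) e0 ->
  is_derive u (1:R) (ln f) (ln (Dd f) u).
Proof.
have eqf : (fun h0 : R => h0^-1 *: ((ln f \o shift u) (h0 *: 1) - ln f u)) =
    (fun h0 => h0^-1 *: ((f \o shift (u *: e0)) (h0 *: e0) - f (u *: e0))).
  apply/funext => h0 /=; rewrite /ln /= scalerDl.
  by rewrite -[h0%:A]/(h0 * 1) mulr1.
move=> df; split; first by rewrite /derivable eqf.
by rewrite /derive eqf.
Qed.

Lemma Ck3 f : CkOn 3 U f ->
  J3 (ln f) (ln (Dd f)) (ln (Dd (Dd f))) (Dd (Dd (Dd f)) 0) /\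
  C0 (ln (Dd (Dd (Dd f)))).
Proof.
move=> [d0 c2]; have [d1 c1] := c2 (inord 0); have [d2 c0] := c1 (inord 0).
have c3 := c0 (inord 0).
split; first split; first split.
- near=> u; apply: ln_derive; apply: d0; near: u; exact: nearU.
- near=> u; apply: ln_derive; apply: d1; near: u; exact: nearU.
- have := ln_derive (d2 _ (nbhs_singleton nearU) (inord 0)).
  by rewrite ln0.
- rewrite /C0 /ln; apply: continuous_comp; first exact: scalel_continuous.
  rewrite scale0r; exact: c3.
Unshelve. all: by end_near. Qed.


Lemma Dphi y : U y ->
  'D_e0 phi y = \matrix_(i < 1, j < 5) 'D_e0 (fun t => phi t i j) y.
Proof.
move=> Uy; apply: derive_mx; apply/derivable_mxP => i j; rewrite (ord1 i).
exact: (Cphi j).1 y Uy (inord 0).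
Qed.

Lemma eqn k : (k < 5)%N -> \forall u \near (0:R),
  ln h u * ln (Dd (P k)) u = field p0 (phi (u *: e0)) 0 (inord k).
Proof.
move=> hk; near=> u.
have Uu : U (u *: e0) by near: u; exact: nearU.
have E := congr1 (fun M : 'rV[R]_5 => M 0 (inord k)) (Heq Uu).
rewrite /= parof_line in E; rewrite -E Dphi // !mxE //.
Unshelve. all: by end_near. Qed.

Lemma parof0 : parof p0 i1 i2 0 = p0.
Proof. by have := parof_line 0; rewrite scale0r. Qed.

Lemma phi0 : phi 0 = dfe p0.
Proof. by rewrite Hdfe // ?parof0 // mxE. Qed.


Lemma Ddir (f : 'rV[R]_5 -> R) a x d :
  is_derive (0:R) (1:R) (fun t => f (t *: a + x)) d -> 'D_a f x = d.
Proof.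
move=> [_ <-]; rewrite /derive.
have -> : (fun h0 : R => h0^-1 *: ((f \o shift x) (h0 *: a) - f x)) =
  (fun h0 => h0^-1 *: (((fun t => f (t *: a + x)) \o shift 0) (h0 *: 1)
     - (fun t => f (t *: a + x)) 0)).
  apply/funext => t /=; rewrite scale0r add0r addr0.
  by rewrite -[t%:A]/(t * 1) mulr1.
by [].
Qed.

Definition S0 := Lam p0 / (mu p0 + psi p0).
Definition V0 := Lam p0 * psi p0 / (mu p0 * (mu p0 + psi p0)).

Lemma dfeE0 (x : 'rV[R]_5) t : (t *: x + dfe p0) 0 (inord 0) = t * x 0 (inord 0) + S0.
Proof. by rewrite !mxE !(@inordK 4). Qed.
Lemma dfeE1 (x : 'rV[R]_5) t : (t *: x + dfe p0) 0 (inord 1) = t * x 0 (inord 1) + V0.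
Proof. by rewrite !mxE !(@inordK 4). Qed.
Lemma dfeE2 (x : 'rV[R]_5) t : (t *: x + dfe p0) 0 (inord 2) = t * x 0 (inord 2).
Proof. by rewrite !mxE !(@inordK 4) //= addr0. Qed.
Lemma dfeE3 (x : 'rV[R]_5) t : (t *: x + dfe p0) 0 (inord 3) = t * x 0 (inord 3).
Proof. by rewrite !mxE !(@inordK 4) //= addr0. Qed.
Lemma dfeE4 (x : 'rV[R]_5) t : (t *: x + dfe p0) 0 (inord 4) = t * x 0 (inord 4).
Proof. by rewrite !mxE !(@inordK 4) //= addr0. Qed.
Definition dfeE := (dfeE0, dfeE1, dfeE2, dfeE3, dfeE4).

Lemma field0 (p : 'I_10 -> R) (x : 'rV[R]_5) : field p x 0 (inord 0) = Lam p - bet p * (x 0 (inord 0) * x 0 (inord 4) / (x 0 (inord 4) + Dh p))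
  - (mu p + psi p) * x 0 (inord 0) + wr p * x 0 (inord 3).
Proof. by rewrite mxE (@inordK 4). Qed.
Lemma field1 (p : 'I_10 -> R) (x : 'rV[R]_5) : field p x 0 (inord 1) =
  psi p * x 0 (inord 0) - sig p * bet p * (x 0 (inord 1) * x 0 (inord 4) / (x 0 (inord 4) + Dh p)) - mu p * x 0 (inord 1).
Proof. by rewrite mxE (@inordK 4). Qed.
Lemma field2 (p : 'I_10 -> R) (x : 'rV[R]_5) : field p x 0 (inord 2) =
  bet p * (x 0 (inord 0) * x 0 (inord 4) / (x 0 (inord 4) + Dh p)) + sig p * bet p * (x 0 (inord 1) * x 0 (inord 4) / (x 0 (inord 4) + Dh p))
         - (mu p + gam p) * x 0 (inord 2).
Proof. by rewrite mxE (@inordK 4). Qed.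
Lemma field3 (p : 'I_10 -> R) (x : 'rV[R]_5) : field p x 0 (inord 3) = gam p * x 0 (inord 2) - (mu p + wr p) * x 0 (inord 3).
Proof. by rewrite mxE (@inordK 4). Qed.
Lemma field4 (p : 'I_10 -> R) (x : 'rV[R]_5) : field p x 0 (inord 4) = eta p * x 0 (inord 2) - del p * x 0 (inord 4).
Proof. by rewrite mxE (@inordK 4). Qed.

Lemma dinv (c d : R) : d != 0 ->
  is_derive (0:R) (1:R) (fun t => (t * c + d)^-1) (- c / d ^+ 2).
Proof.
move=> d0.
have df : is_derive (0:R) (1:R) (fun t => t * c + d) c.
  by apply: is_derive_eq; rewrite /GRing.scale /=; ring.
have d0' : (fun t => t * c + d) 0 != 0 by rewrite /= mul0r add0r.
have dv := @is_deriveV R (fun t => t * c + d) 0 c 1 d0' df.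
apply: (is_derive_eq dv).
by rewrite /= mul0r add0r /GRing.scale /=; field.
Qed.

Lemma jrow0 a : 'D_a (fun x => field p0 x 0 (inord 0)) (dfe p0) =
  - bet p0 * S0 * a 0 (inord 4) / Dh p0 - (mu p0 + psi p0) * a 0 (inord 0)
  + wr p0 * a 0 (inord 3).
Proof.
apply: (@Ddir (fun x => field p0 x 0 (inord 0)) a (dfe p0)).
have -> : (fun t => field p0 (t *: a + dfe p0) 0 (inord 0)) = (fun t => Lam p0 -
   bet p0 * ((t * a 0 (inord 0) + S0) * (t * a 0 (inord 4)) / (t * a 0 (inord 4) + Dh p0))
  - (mu p0 + psi p0) * (t * a 0 (inord 0) + S0) + wr p0 * (t * a 0 (inord 3))).
  by apply/funext => t; rewrite field0; rewrite !dfeE.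
have D0 : Dh p0 != 0 by exact: lt0r_neq0 (pos _).
have dv := dinv (a 0 (inord 4)) D0.
apply: is_derive_eq; rewrite /GRing.scale /= !(mul0r, add0r, addr0, mulr0, mulr1).
by field.
Qed.

Lemma jrow1 a : 'D_a (fun x => field p0 x 0 (inord 1)) (dfe p0) =
  psi p0 * a 0 (inord 0) - sig p0 * bet p0 * V0 * a 0 (inord 4) / Dh p0
  - mu p0 * a 0 (inord 1).
Proof.
apply: (@Ddir (fun x => field p0 x 0 (inord 1)) a (dfe p0)).
have -> : (fun t => field p0 (t *: a + dfe p0) 0 (inord 1)) = (fun t =>
   psi p0 * (t * a 0 (inord 0) + S0) - sig p0 * bet p0 *
   ((t * a 0 (inord 1) + V0) * (t * a 0 (inord 4)) / (t * a 0 (inord 4) + Dh p0))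
  - mu p0 * (t * a 0 (inord 1) + V0)).
  by apply/funext => t; rewrite field1; rewrite !dfeE.
have D0 : Dh p0 != 0 by exact: lt0r_neq0 (pos _).
have dv := dinv (a 0 (inord 4)) D0.
apply: is_derive_eq; rewrite /GRing.scale /= !(mul0r, add0r, addr0, mulr0, mulr1).
by field.
Qed.

Lemma jrow2 a : 'D_a (fun x => field p0 x 0 (inord 2)) (dfe p0) =
  bet p0 * S0 * a 0 (inord 4) / Dh p0 + sig p0 * bet p0 * V0 * a 0 (inord 4) / Dh p0
  - (mu p0 + gam p0) * a 0 (inord 2).
Proof.
apply: (@Ddir (fun x => field p0 x 0 (inord 2)) a (dfe p0)).
have -> : (fun t => field p0 (t *: a + dfe p0) 0 (inord 2)) = (fun t =>
   bet p0 * ((t * a 0 (inord 0) + S0) * (t * a 0 (inord 4)) / (t * a 0 (inord 4) + Dh p0))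
   + sig p0 * bet p0 *
   ((t * a 0 (inord 1) + V0) * (t * a 0 (inord 4)) / (t * a 0 (inord 4) + Dh p0))
  - (mu p0 + gam p0) * (t * a 0 (inord 2))).
  by apply/funext => t; rewrite field2; rewrite !dfeE.
have D0 : Dh p0 != 0 by exact: lt0r_neq0 (pos _).
have dv := dinv (a 0 (inord 4)) D0.
apply: is_derive_eq; rewrite /GRing.scale /= !(mul0r, add0r, addr0, mulr0, mulr1).
by field.
Qed.

Lemma jrow3 a : 'D_a (fun x => field p0 x 0 (inord 3)) (dfe p0) =
  gam p0 * a 0 (inord 2) - (mu p0 + wr p0) * a 0 (inord 3).
Proof.
apply: (@Ddir (fun x => field p0 x 0 (inord 3)) a (dfe p0)).
have -> : (fun t => field p0 (t *: a + dfe p0) 0 (inord 3)) = (fun t =>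
   gam p0 * (t * a 0 (inord 2)) - (mu p0 + wr p0) * (t * a 0 (inord 3))).
  by apply/funext => t; rewrite field3; rewrite !dfeE.
apply: is_derive_eq; rewrite /GRing.scale /=; ring.
Qed.

Lemma jrow4 a : 'D_a (fun x => field p0 x 0 (inord 4)) (dfe p0) =
  eta p0 * a 0 (inord 2) - del p0 * a 0 (inord 4).
Proof.
apply: (@Ddir (fun x => field p0 x 0 (inord 4)) a (dfe p0)).
have -> : (fun t => field p0 (t *: a + dfe p0) 0 (inord 4)) = (fun t =>
   eta p0 * (t * a 0 (inord 2)) - del p0 * (t * a 0 (inord 4))).
  by apply/funext => t; rewrite field4; rewrite !dfeE.
apply: is_derive_eq; rewrite /GRing.scale /=; ring.
Qed.

Lemma sum5 (F : 'I_5 -> R) : \sum_(m < 5) F m =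
  F (inord 0) + F (inord 1) + F (inord 2) + F (inord 3) + F (inord 4).
Proof.
rewrite !big_ord_recr big_ord0 /= add0r.
by congr (_ + _ + _ + _ + _); congr F; apply: val_inj; rewrite /= inordK.
Qed.

Lemma dE (m k : nat) : (m < 5)%N -> (k < 5)%N ->
  (delta_mx 0 (inord m) : 'rV[R]_5) 0 (inord k) = (m == k)%:R.
Proof. by move=> hm hk; rewrite mxE eqxx /= -val_eqE /= !(@inordK 4) // eq_sym. Qed.

Lemma jacE j (w : 'rV[R]_5) : (jac p0 *m w^T) (inord j) 0 =
  \sum_(m < 5) 'D_(delta_mx 0 m) (fun x => field p0 x 0 (inord j)) (dfe p0) * w 0 m.
Proof. by rewrite !mxE; apply: eq_bigr => m _; rewrite !mxE. Qed.

Hypothesis Hjac : jac p0 *m ('D_(e3 R 0) phi 0)^T = 0.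
Definition w k := 'D_e0 phi 0 0 (inord k).

Lemma Ljac0 : - bet p0 * S0 * w 4 / Dh p0 - (mu p0 + psi p0) * w 0
  + wr p0 * w 3 = 0.
Proof.
have := congr1 (fun M : 'M[R]_(5,1) => M (inord 0) 0) Hjac; rewrite /= jacE sum5 !jrow0 !dE //=.
rewrite mxE => <-; rewrite /w; ring.
Qed.

Lemma Ljac1 : psi p0 * w 0 - sig p0 * bet p0 * V0 * w 4 / Dh p0 - mu p0 * w 1 = 0.
Proof.
have := congr1 (fun M : 'M[R]_(5,1) => M (inord 1) 0) Hjac; rewrite /= jacE sum5 !jrow1 !dE //=.
rewrite mxE => <-; rewrite /w; ring.
Qed.

Lemma Ljac2 : bet p0 * S0 * w 4 / Dh p0 + sig p0 * bet p0 * V0 * w 4 / Dh p0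
  - (mu p0 + gam p0) * w 2 = 0.
Proof.
have := congr1 (fun M : 'M[R]_(5,1) => M (inord 2) 0) Hjac; rewrite /= jacE sum5 !jrow2 !dE //=.
rewrite mxE => <-; rewrite /w; ring.
Qed.

Lemma Ljac3 : gam p0 * w 2 - (mu p0 + wr p0) * w 3 = 0.
Proof.
have := congr1 (fun M : 'M[R]_(5,1) => M (inord 3) 0) Hjac; rewrite /= jacE sum5 !jrow3 !dE //=.
rewrite mxE => <-; rewrite /w; ring.
Qed.

Lemma Ljac4 : eta p0 * w 2 - del p0 * w 4 = 0.
Proof.
have := congr1 (fun M : 'M[R]_(5,1) => M (inord 4) 0) Hjac; rewrite /= jacE sum5 !jrow4 !dE //=.
rewrite mxE => <-; rewrite /w; ring.
Qed.

Lemma Ck3' f : CkOn 3 U f ->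
  J2C (ln (Dd f)) (ln (Dd (Dd f))) (ln (Dd (Dd (Dd f)))).
Proof.
move=> Cf; have [[[_ j1] _] c3] := Ck3 Cf.
move: Cf => [d0 c2]; have [d1 c1] := c2 (inord 0); have [d2 c0] := c1 (inord 0).
split; last exact: c3.
split; first exact: j1.
near=> u; apply: ln_derive; apply: d2; near: u; exact: nearU.
Unshelve. all: by end_near. Qed.
Definition X k := ln (P k).
Definition DX k := ln (Dd (P k)).
Definition DDX k := ln (Dd (Dd (P k))).
Definition DDDX k := ln (Dd (Dd (Dd (P k)))).
Definition x3 k := Dd (Dd (Dd (P k))) 0.

Lemma jX k : J3 (X k) (DX k) (DDX k) (x3 k).
Proof. exact: (Ck3 (Cphi (inord k))).1. Qed.
Lemma jDX k : J2C (DX k) (DDX k) (DDDX k).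
Proof. exact: (Ck3' (Cphi (inord k))). Qed.
Lemma jH : J3 (ln h) (ln (Dd h)) (ln (Dd (Dd h))) (Dd (Dd (Dd h)) 0).
Proof. exact: (Ck3 Ch).1. Qed.

Lemma wE k : w k = DX k 0.
Proof. by rewrite /w /DX ln0 Dphi // mxE. Qed.

Lemma X0E : [/\ X 0 0 = S0, X 1 0 = V0, X 2 0 = 0, X 3 0 = 0 & X 4 0 = 0].
Proof. by rewrite /X !ln0 /P phi0; split; rewrite mxE (@inordK 4). Qed.

Hypothesis Hw : 'D_(e3 R 0) phi 0 != 0.
Hypothesis HwI : 0 <= sI ('D_(e3 R 0) phi 0).
Hypothesis HwB : 0 <= sB ('D_(e3 R 0) phi 0).
Hypothesis Ha : coef_a h = 0.

Ltac posf := have hL : 0 < Lam p0 := pos _; have hb : 0 < bet p0 := pos _;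
  have hD : 0 < Dh p0 := pos _; have hm : 0 < mu p0 := pos _;
  have hp : 0 < psi p0 := pos _; have hw : 0 < wr p0 := pos _;
  have hs : 0 < sig p0 := pos _; have hg : 0 < gam p0 := pos _;
  have he : 0 < eta p0 := pos _; have hd : 0 < del p0 := pos _.

Lemma S0pos : 0 < S0.
Proof. posf; rewrite /S0; apply: divr_gt0 => //; lra. Qed.
Lemma V0pos : 0 < V0.
Proof. posf; rewrite /V0; apply: divr_gt0; [exact: mulr_gt0| apply: mulr_gt0 => //; lra]. Qed.

Lemma R0E : eta p0 * bet p0 * (S0 + sig p0 * V0) = Dh p0 * del p0 * (mu p0 + gam p0).
Proof.
posf; have := HR0; rewrite /R0.
have -> : sS (dfe p0) = S0 by rewrite /sS mxE (@inordK 4).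
have -> : sV (dfe p0) = V0 by rewrite /sV mxE (@inordK 4).
move=> E; rewrite -[RHS]mul1r -E; field.
by apply/and3P; split; apply: lt0r_neq0 => //; lra.
Qed.

Lemma w_nz : ~ (forall k, (k < 5)%N -> w k = 0).
Proof.
move=> all0; move/eqP: Hw; apply; apply/matrixP => i j; rewrite (ord1 i) !mxE.
by have := all0 j (ltn_ord j); rewrite /w inord_val.
Qed.

Lemma w2pos : 0 < w 2.
Proof.
posf; have w2ge : 0 <= w 2 by exact: HwI.
rewrite lt_neqAle w2ge andbT eq_sym; apply/negP => /eqP w20.
have w40 : w 4 = 0.
  by have := Ljac4; rewrite w20 mulr0 sub0r => /eqP; rewrite oppr_eq0 mulf_eq0 (gt_eqF hd) => /eqP.
have w30 : w 3 = 0.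
  have : (mu p0 + wr p0) * w 3 = 0 by have := Ljac3; rewrite w20; lra.
  by move/eqP; rewrite mulf_eq0 gt_eqF /= ?addr_gt0 // => /eqP.
have w00 : w 0 = 0.
  have : (mu p0 + psi p0) * w 0 = 0 by have := Ljac0; rewrite w40 w30; lra.
  by move/eqP; rewrite mulf_eq0 gt_eqF /= ?addr_gt0 // => /eqP.
have w10 : w 1 = 0.
  have : mu p0 * w 1 = 0 by have := Ljac1; rewrite w40 w00; lra.
  by move/eqP; rewrite mulf_eq0 gt_eqF /= // => /eqP.
apply: w_nz => k; case: k => [|[|[|[|[|k]]]]] // _.
Qed.

Lemma H0 : ln h 0 = 0.
Proof.
have E := nbhs_singleton (eqn (k:=2) isT).
rewrite /= scale0r phi0 field2 in E.
have e : ln h 0 * w 2 = 0.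
  rewrite wE [LHS]E /sS /sV /sI /sB !mxE !(@inordK 4) //=; ring.
by move/eqP: e; rewrite mulf_eq0 (gt_eqF w2pos) orbF => /eqP.
Qed.

Lemma nearB : \forall u \near (0:R), 0 < X 4 u + Dh p0.
Proof.
have [c4 _] := J2_C0 (J3_J2 (jX 4)).
have [_ _ _ _ x40] := X0E.
have hD : - Dh p0 < X 4 0 by rewrite x40 oppr_lt0; exact: pos.
have nb := cvgr_gt (X 4 0) c4 (- Dh p0) hD.
near=> u; suff : - Dh p0 < X 4 u by lra.
near: u; exact: nb.
Unshelve. all: by end_near. Qed.

Lemma Eq4 : \forall u \near (0:R),
  ln h u * DX 4 u = eta p0 * X 2 u - del p0 * X 4 u.
Proof.
have E := eqn (k:=4) isT; near=> u.
by rewrite [LHS](near E u) // field4.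
Unshelve. all: by end_near. Qed.

Lemma Eq3 : \forall u \near (0:R),
  ln h u * DX 3 u = gam p0 * X 2 u - (mu p0 + wr p0) * X 3 u.
Proof.
have E := eqn (k:=3) isT; near=> u.
by rewrite [LHS](near E u) // field3.
Unshelve. all: by end_near. Qed.

Lemma Eq0 : \forall u \near (0:R),
  (X 4 u + Dh p0) * (ln h u * DX 0 u) = (X 4 u + Dh p0) *
    (Lam p0 - (mu p0 + psi p0) * X 0 u + wr p0 * X 3 u) - bet p0 * (X 0 u * X 4 u).
Proof.
have E := eqn (k:=0) isT; near=> u.
have hB : 0 < X 4 u + Dh p0 by near: u; exact: nearB.
rewrite [ln h u * _](near E u) // field0.
rewrite -[phi (u *: e0) 0 (inord 0)]/(X 0 u) -[phi (u *: e0) 0 (inord 4)]/(X 4 u).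
rewrite -[phi (u *: e0) 0 (inord 3)]/(X 3 u).
by field; rewrite lt0r_neq0.
Unshelve. all: by end_near. Qed.

Lemma Eq1 : \forall u \near (0:R),
  (X 4 u + Dh p0) * (ln h u * DX 1 u) = (X 4 u + Dh p0) *
    (psi p0 * X 0 u - mu p0 * X 1 u) - sig p0 * bet p0 * (X 1 u * X 4 u).
Proof.
have E := eqn (k:=1) isT; near=> u.
have hB : 0 < X 4 u + Dh p0 by near: u; exact: nearB.
rewrite [ln h u * _](near E u) // field1.
rewrite -[phi (u *: e0) 0 (inord 0)]/(X 0 u) -[phi (u *: e0) 0 (inord 4)]/(X 4 u).
rewrite -[phi (u *: e0) 0 (inord 1)]/(X 1 u).
by field; rewrite lt0r_neq0.
Unshelve. all: by end_near. Qed.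

Definition kk := (mu p0 + gam p0) / eta p0.

Lemma EqC : \forall u \near (0:R),
  ln h u * ((X 4 u + Dh p0) * (DX 2 u + kk * DX 4 u)) =
  bet p0 * ((X 0 u + sig p0 * X 1 u) * X 4 u) - kk * del p0 * ((X 4 u + Dh p0) * X 4 u).
Proof.
have E := eqn (k:=2) isT; have E4 := Eq4; near=> u.
have hB : 0 < X 4 u + Dh p0 by near: u; exact: nearB.
have he : 0 < eta p0 := pos _.
have -> : ln h u * ((X 4 u + Dh p0) * (DX 2 u + kk * DX 4 u)) =
  (X 4 u + Dh p0) * (ln h u * DX 2 u + kk * (ln h u * DX 4 u)) by ring.
rewrite [ln h u * DX 2 u](near E u) // [ln h u * DX 4 u](near E4 u) // field2.
rewrite -[phi (u *: e0) 0 (inord 0)]/(X 0 u) -[phi (u *: e0) 0 (inord 4)]/(X 4 u).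
rewrite -[phi (u *: e0) 0 (inord 1)]/(X 1 u) -[phi (u *: e0) 0 (inord 2)]/(X 2 u).
rewrite /kk; field; rewrite ?lt0r_neq0 //.
Unshelve. all: by end_near. Qed.

Lemma H2_0 : ln (Dd (Dd h)) 0 = 0.
Proof. rewrite ln0; have : Dd (Dd h) 0 / 2 = 0 := Ha; lra. Qed.


Lemma w4E : w 4 = eta p0 * w 2 / del p0.
Proof.
have hd : 0 < del p0 := pos _.
move/eqP: Ljac4; rewrite subr_eq0 => /eqP e.
by rewrite e; field; rewrite lt0r_neq0.
Qed.
Lemma w3E : w 3 = gam p0 * w 2 / (mu p0 + wr p0).
Proof.
have hm : 0 < mu p0 + wr p0 by apply: addr_gt0; exact: pos.
move/eqP: Ljac3; rewrite subr_eq0 => /eqP e.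
by rewrite e; field; rewrite lt0r_neq0.
Qed.
Lemma w4pos : 0 < w 4.
Proof. rewrite w4E; apply: divr_gt0; [apply: mulr_gt0; [exact: pos| exact: w2pos]| exact: pos]. Qed.
Lemma w3pos : 0 < w 3.
Proof.
rewrite w3E; apply: divr_gt0; [apply: mulr_gt0; [exact: pos| exact: w2pos]|].
by apply: addr_gt0; exact: pos.
Qed.

Lemma ord2_4 : ln (Dd h) 0 = 0 /\ eta p0 * DDX 2 0 - del p0 * DDX 4 0 = 0.
Proof.
have jL := J2M (J3_J2 jH) (jDX 4).1.
have jR := J2D (J2Z (eta p0) (J3_J2 (jX 2))) (J2N (J2Z (del p0) (J3_J2 (jX 4)))).
have [_ e1 e2] := J2_eq jL jR Eq4.
move: e1 e2 => /=; rewrite H0 H2_0 -!wE => e1 e2.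
have h1 : ln (Dd h) 0 * w 4 = 0.
  by apply: (etrans _ Ljac4); rewrite -e1 mul0r addr0.
move/eqP: h1; rewrite mulf_eq0 (gt_eqF w4pos) orbF => /eqP h1.
split; first exact: h1.
move: e2.
rewrite h1.
move=> e.
rewrite -e.
move: (w 4) (DDX 4 0) (DDDX 4 0) => a b c.
ring.
Qed.

Lemma H1_0 : ln (Dd h) 0 = 0.
Proof. exact: ord2_4.1. Qed.

Lemma ord2_3 : gam p0 * DDX 2 0 - (mu p0 + wr p0) * DDX 3 0 = 0.
Proof.
have jL := J2M (J3_J2 jH) (jDX 3).1.
have jR := J2D (J2Z (gam p0) (J3_J2 (jX 2))) (J2N (J2Z (mu p0 + wr p0) (J3_J2 (jX 3)))).
have [_ _ e2] := J2_eq jL jR Eq3.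
move: e2 => /=; rewrite H0 H1_0 H2_0 => e; rewrite -e.
move: (DX 3 0) (DDX 3 0) (DDDX 3 0) => a b c; ring.
Qed.

Lemma lc (x y z : R) : x = y -> z = y - x -> z = 0.
Proof. by move=> -> ->; rewrite subrr. Qed.

Lemma hLam : Lam p0 = (mu p0 + psi p0) * S0.
Proof.
rewrite /S0; have hm : 0 < mu p0 + psi p0 by apply: addr_gt0; exact: pos.
by field; rewrite lt0r_neq0.
Qed.

Lemma hPsi : psi p0 * S0 = mu p0 * V0.
Proof.
rewrite /S0 /V0; have hm : 0 < mu p0 + psi p0 by apply: addr_gt0; exact: pos.
have hm' : 0 < mu p0 := pos _.
by field; rewrite !lt0r_neq0.
Qed.

Lemma ord2_0 : 2 * w 4 * (wr p0 * w 3 - (mu p0 + psi p0) * w 0)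
  + Dh p0 * (wr p0 * DDX 3 0 - (mu p0 + psi p0) * DDX 0 0)
  - bet p0 * (2 * (w 0 * w 4) + S0 * DDX 4 0) = 0.
Proof.
have jB := J2D (J3_J2 (jX 4)) (J2_cst (Dh p0)).
have jL := J2M jB (J2M (J3_J2 jH) (jDX 0).1).
have jR := J2D (J2M jB (J2D (J2D (J2_cst (Lam p0))
  (J2N (J2Z (mu p0 + psi p0) (J3_J2 (jX 0))))) (J2Z (wr p0) (J3_J2 (jX 3)))))
  (J2N (J2Z (bet p0) (J2M (J3_J2 (jX 0)) (J3_J2 (jX 4))))).
have [_ _ e2] := J2_eq jL jR Eq0.
have [x0 x1 x2 x3 x4] := X0E.
move: e2 => /=; rewrite H0 H1_0 H2_0 x0 x3 x4 -!wE hLam.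
move: (w 0) (w 3) (w 4) (DDX 0 0) (DDX 3 0) (DDX 4 0) (DDDX 0 0) => a b c d e f g.
move=> E; apply: (lc E); ring.
Qed.

Lemma ord2_1 : 2 * w 4 * (psi p0 * w 0 - mu p0 * w 1)
  + Dh p0 * (psi p0 * DDX 0 0 - mu p0 * DDX 1 0)
  - sig p0 * bet p0 * (2 * (w 1 * w 4) + V0 * DDX 4 0) = 0.
Proof.
have jB := J2D (J3_J2 (jX 4)) (J2_cst (Dh p0)).
have jL := J2M jB (J2M (J3_J2 jH) (jDX 1).1).
have jR := J2D (J2M jB (J2D (J2Z (psi p0) (J3_J2 (jX 0)))
  (J2N (J2Z (mu p0) (J3_J2 (jX 1))))))
  (J2N (J2Z (sig p0 * bet p0) (J2M (J3_J2 (jX 1)) (J3_J2 (jX 4))))).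
have [_ _ e2] := J2_eq jL jR Eq1.
have [x0 x1 x2 x3 x4] := X0E.
move: e2 => /=; rewrite H0 H1_0 H2_0 x0 x1 x4 -!wE.
have hP := hPsi.
move: (w 0) (w 1) (w 4) (DDX 0 0) (DDX 1 0) (DDX 4 0) (DDDX 1 0) => a b c d e f g.
move=> E; apply: (lc E); rewrite -!mulrA -hP; ring.
Qed.

Lemma lcg (x y u v A B c1 c2 : R) : x = y -> u = v ->
  A - B = c1 * (y - x) + c2 * (v - u) -> A = B.
Proof. by move=> -> -> /eqP; rewrite !subrr !mulr0 addr0 subr_eq0 => /eqP. Qed.

Lemma kdN : kk * del p0 * Dh p0 = bet p0 * (S0 + sig p0 * V0).
Proof.
have he : 0 < eta p0 := pos _.
have Dd0 : Dh p0 * del p0 != 0 by rewrite mulf_neq0 // lt0r_neq0 //; exact: pos.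
have E : mu p0 + gam p0 = eta p0 * bet p0 * (S0 + sig p0 * V0) / (Dh p0 * del p0).
  by apply/eqP; rewrite -(can_eq (mulfK Dd0)) divfK //; apply/eqP; rewrite R0E mulrC.
rewrite /kk E; field; rewrite lt0r_neq0 //=.
by rewrite !lt0r_neq0 //; exact: pos.
Qed.

Lemma jX4c : J2C (X 4) (DX 4) (DDX 4).
Proof. by split; [exact: J3_J2 (jX 4)| exact: (J2_C0 (jDX 4).1).2]. Qed.

Lemma ordC : bet p0 * (w 0 + sig p0 * w 1) = kk * del p0 * w 4 /\
  Dd (Dd (Dd h)) 0 * (Dh p0 * (w 2 + kk * w 4)) =
   bet p0 * (3 * (DDX 0 0 + sig p0 * DDX 1 0) * w 4 + 3 * (w 0 + sig p0 * w 1) * DDX 4 0)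
   - kk * del p0 * (6 * (w 4 * DDX 4 0)).
Proof.
have jZ := J2CM (J2CD jX4c (J2C_cst (Dh p0))) (J2CD (jDX 2) (J2CZ kk (jDX 4))).
have jL := J3M0 jH H0 jZ.1 jZ.2.
have jR := J3D (J3Z (bet p0) (J3M (J3D (jX 0) (J3Z (sig p0) (jX 1))) (jX 4)))
  (J3N (J3Z (kk * del p0) (J3M (J3D (jX 4) (J3_cst (Dh p0))) (jX 4)))).
have [_ _ e2 e3] := J3_eq jL jR EqC.
have [y0 y1 y2 y3 y4] := X0E.
have kN := kdN.
move: e2 e3 => /=; rewrite H0 H1_0 H2_0 y0 y1 y4 -!wE => e2 e3.
move: w4pos e2 e3.
move: (Dd (Dd (Dd h)) 0) (w 0) (w 1) (w 2) (w 4) (DDX 0 0) (DDX 1 0) (DDX 2 0)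
  (DDX 4 0) (DDDX 2 0) (DDDX 4 0) (x3 0) (x3 1) (x3 4) => h3 a b c d f g i j k l m n o.
move=> dp e2 e3; split.
  have z : 2 * d * (bet p0 * (a + sig p0 * b) - kk * del p0 * d) = 0.
    by apply: (lcg (c1 := 1) (c2 := - j) e2 kN); ring.
  move/eqP: z; rewrite mulf_eq0 mulf_eq0 (gt_eqF dp) pnatr_eq0 /= subr_eq0.
  by move/eqP.
by apply: (lcg (c1 := -1) (c2 := o) e3 kN); ring.
Qed.

Lemma main_c : coef_c h <= 0.
Proof.
have := @final_alg R (bet p0) (Dh p0) (mu p0) (psi p0) (wr p0) (sig p0) (gam p0)
  (eta p0) (del p0) S0 V0 kk (w 0) (w 1) (w 2) (w 3) (w 4) (DDX 0 0) (DDX 1 0)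
  (DDX 2 0) (DDX 3 0) (DDX 4 0) (Dd (Dd (Dd h)) 0) (pos _) (pos _) (pos _) (pos _)
  (pos _) (pos _) (pos _) (pos _) (pos _) S0pos V0pos erefl Ljac0 Ljac1 Ljac2 Ljac3
  Ljac4 w2pos R0E ord2_4.2 ord2_3 ord2_0 ord2_1 ordC.1 ordC.2.
move=> hn; rewrite /coef_c.
have -> : d1 0 (d1 0 (d1 0 h)) 0 = Dd (Dd (Dd h)) 0 by [].
move: hn; move: (Dd (Dd (Dd h)) 0) => x hx; lra.
Qed.

End Main.

Theorem lemma1 (R : realType) (p0 : 'I_10 -> R) (i1 i2 : 'I_10)
    (U : set 'rV[R]_3) (phi : 'rV[R]_3 -> 'rV[R]_5) (h : 'rV[R]_3 -> R) :
  (forall k, 0 < p0 k) ->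
  R0 p0 = 1 ->
  bif_spectrum (jac p0) ->
  i1 != i2 ->
  (forall t s : R, dfe (shiftp p0 i1 i2 t s) = dfe (shiftp p0 i1 i2 0 s)) ->
  open U -> U 0 ->
  (forall j : 'I_5, CkOn 3 U (fun y => phi y 0 j)) ->
  CkOn 3 U h ->
  (forall y, U y -> y 0 (inord 0) = 0 -> phi y = dfe (parof p0 i1 i2 y)) ->
  (forall y, U y -> h y *: 'D_(e3 R 0) phi y = field (parof p0 i1 i2 y) (phi y)) ->
  'D_(e3 R 0) phi 0 != 0 ->
  jac p0 *m ('D_(e3 R 0) phi 0)^T = 0 ->
  0 <= sI ('D_(e3 R 0) phi 0) -> 0 <= sB ('D_(e3 R 0) phi 0) ->
  coef_a h = 0 -> 0 < coef_b h -> coef_e h != 0 ->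
  coef_c h <= 0.
Proof.
move=> pos HR0 _ _ _ oU U0 Cphi Ch Hdfe Heq Hw Hjac HwI HwB Ha _ _.
exact: (main_c pos HR0 oU U0 Cphi Ch Hdfe Heq Hjac Hw HwI Ha).
Qed.
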